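(* Let $T$ be a complete theory and $\mathcal{M}$ a sufficiently saturated model of $T$. (1) The set $\mathcal{SL}_{\rm acl}(T)$ of all regular operators of the form ${\rm acl}^\Delta$ ($\Delta$ a set of formulae), ordered by pointwise inclusion, is a lower semilattice (any two elements have a greatest lower bound, given by intersection) with a least and a greatest element. (2) For $n\in\omega\setminus\{0\}$, the set $\mathcal{SL}_{{\rm acl}_n}(T)$ of all regular operators of the form ${\rm acl}^\Delta_n$, ordered by pointwise inclusion, is a lower semilattice with a least element; it has a greatest element if the operator ${\rm acl}_n$ is regular.
   Context: For a set $\Delta$ of formulae $\varphi(x,\overline{y})$ and $A\subseteq M$, ${\rm acl}^\Delta(A)$ is the union of the solution sets $\varphi(\mathcal{M},\overline{a})$ over $\varphi\in\Delta$ and tuples $\overline{a}$ from $A$ such that $\varphi(x,\overline{a})$ has finitely many solutions; ${\rm acl}^\Delta_n(A)$ is the analogous union over those with at most $n$ solutions. ${\rm acl}_n$ is ${\rm acl}^\Delta_n$ with $\Delta$ the set of all formulae, and ${\rm acl}$ is ${\rm acl}^\Delta$ with $\Delta$ all formulae. An operator ${\rm cl}$ on subsets of $M$ is regular if $A\subseteq{\rm cl}(A)$ and ${\rm cl}({\rm cl}(A))\subseteq{\rm cl}(A)$ for all $A\subseteq M$. Pointwise inclusion: ${\rm cl}_1\leq{\rm cl}_2$ iff ${\rm cl}_1(A)\subseteq{\rm cl}_2(A)$ for all $A$. *)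

(* Defs.v *)
From mathcomp Require Import ssreflect ssrfun ssrbool eqtype ssrnat seq fintype.
From Stdlib Require Import List.

Set Implicit Arguments.
Unset Strict Implicit.
Unset Printing Implicit Defensive.

Record language := Language {
  Fun : Type; Rel : Type;
  farity : Fun -> nat; rarity : Rel -> nat }.

Section Syntax.
Variable L : language.

Inductive term : Type :=
  | tvar : nat -> term
  | tapp : forall f : Fun L, ('I_(farity f) -> term) -> term.

Inductive formula : Type :=
  | fFalse : formula
  | fEq : term -> term -> formula
  | fRel : forall r : Rel L, ('I_(rarity r) -> term) -> formula
  | fNeg : formula -> formula
  | fAnd : formula -> formula -> formula
  | fOr : formula -> formula -> formula
  | fEx : nat -> formula -> formula.   (* fEx n phi = exists v_n, phi *)

Fixpoint term_free (i : nat) (t : term) : Prop :=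
  match t with
  | tvar j => i = j
  | tapp f args => exists k, term_free i (args k)
  end.

Fixpoint free_in (i : nat) (phi : formula) : Prop :=
  match phi with
  | fFalse => False
  | fEq t1 t2 => term_free i t1 \/ term_free i t2
  | fRel r args => exists k, term_free i (args k)
  | fNeg p => free_in i p
  | fAnd p q => free_in i p \/ free_in i q
  | fOr p q => free_in i p \/ free_in i q
  | fEx n p => i <> n /\ free_in i p
  end.

Definition sentence (phi : formula) : Prop := forall i, ~ free_in i phi.

(* A formula phi(x, y_1..y_k): free variables among v_0 (= x), v_1..v_k. *)
Record pformula := PFormula {
  pk : nat;
  pform : formula;
  pbound : forall i, free_in i pform -> i <= pk }.

End Syntax.

Record structure (L : language) := Structure {
  carrier :> Type;
  witness : carrier;       (* structures are nonempty *)
  funI : forall f : Fun L, ('I_(farity f) -> carrier) -> carrier;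
  relI : forall r : Rel L, ('I_(rarity r) -> carrier) -> Prop }.

Section Semantics.
Variables (L : language) (M : structure L).

Fixpoint teval (v : nat -> M) (t : term L) : M :=
  match t with
  | tvar j => v j
  | tapp f args => @funI L M f (fun k => teval v (args k))
  end.

Definition upd (v : nat -> M) (n : nat) (a : M) : nat -> M :=
  fun i => if i == n then a else v i.

Fixpoint sat (v : nat -> M) (phi : formula L) : Prop :=
  match phi with
  | fFalse => False
  | fEq t1 t2 => teval v t1 = teval v t2
  | fRel r args => @relI L M r (fun k => teval v (args k))
  | fNeg p => ~ sat v p
  | fAnd p q => sat v p /\ sat v q
  | fOr p q => sat v p \/ sat v q
  | fEx n p => exists a, sat (upd v n a) p
  end.

Definition models_sent (phi : formula L) : Prop := sat (fun _ => witness M) phi.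

(* phi(M, a) for a tuple a of length pk phi : the solution set in x = v_0 *)
Definition env (m : M) k (a : 'I_k -> M) : nat -> M :=
  fun i => match i with
           | 0 => m
           | j.+1 => match insub j with Some o => a o | None => m end
           end.

Definition sol (phi : pformula L) (a : 'I_(pk phi) -> M) : M -> Prop :=
  fun m => sat (env m a) (pform phi).

End Semantics.

Definition models (L : language) (M : structure L) (T : formula L -> Prop) :=
  forall phi, T phi -> models_sent M phi.

Definition complete_theory (L : language) (T : formula L -> Prop) : Prop :=
  (forall phi, T phi -> sentence phi) /\
  (exists N : structure L, models N T) /\
  (forall sigma, sentence sigma ->
     (forall N : structure L, models N T -> models_sent N sigma) \/
     (forall N : structure L, models N T -> models_sent N (fNeg sigma))).

Section Saturation.
Variables (L : language) (M : structure L).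

Definition pinst := {phi : pformula L & 'I_(pk phi) -> M}.

Definition inst_holds (c : pinst) (m : M) : Prop := sol (projT2 c) m.

Definition smaller_than (K : Type) (B : M -> Prop) : Prop :=
  ~ exists f : K -> M, injective f /\ forall k, B (f k).

Definition saturated (K : Type) : Prop :=
  forall (B : M -> Prop), smaller_than K B ->
  forall (p : pinst -> Prop),
    (forall c, p c -> forall i, B (projT2 c i)) ->
    (forall l : list pinst, (forall c, In c l -> p c) ->
        exists m, forall c, In c l -> inst_holds c m) ->
    exists m, forall c, p c -> inst_holds c m.

End Saturation.

Section Closure.
Variables (L : language) (M : structure L).

Definition operator := (M -> Prop) -> (M -> Prop).

Definition finite_set (S : M -> Prop) : Prop :=
  exists l : list M, forall x, S x -> In x l.

Definition atmost (n : nat) (S : M -> Prop) : Prop :=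
  exists l : list M, size l <= n /\ forall x, S x -> In x l.

Definition aclD (Delta : pformula L -> Prop) : operator :=
  fun A x => exists phi, Delta phi /\
    exists a : 'I_(pk phi) -> M, (forall i, A (a i)) /\
      finite_set (sol a) /\ sol a x.

Definition aclDn (Delta : pformula L -> Prop) (n : nat) : operator :=
  fun A x => exists phi, Delta phi /\
    exists a : 'I_(pk phi) -> M, (forall i, A (a i)) /\
      atmost n (sol a) /\ sol a x.

Definition all_formulas : pformula L -> Prop := fun _ => True.
Definition acl : operator := aclD all_formulas.
Definition acln (n : nat) : operator := aclDn all_formulas n.

Definition regular (cl : operator) : Prop :=
  forall A, (forall x, A x -> cl A x) /\ (forall x, cl (cl A) x -> cl A x).

Definition op_le (cl1 cl2 : operator) : Prop := forall A x, cl1 A x -> cl2 A x.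

Definition op_meet (cl1 cl2 : operator) : operator := fun A x => cl1 A x /\ cl2 A x.

Definition in_SL_acl (cl : operator) : Prop :=
  regular cl /\ exists Delta, forall A x, cl A x <-> aclD Delta A x.

Definition in_SL_acln (n : nat) (cl : operator) : Prop :=
  regular cl /\ exists Delta, forall A x, cl A x <-> aclDn Delta n A x.

Definition meet_semilattice_by_intersection (S : operator -> Prop) : Prop :=
  forall cl1 cl2, S cl1 -> S cl2 -> S (op_meet cl1 cl2).

Definition has_least (S : operator -> Prop) : Prop :=
  exists cl0, S cl0 /\ forall cl, S cl -> op_le cl0 cl.

Definition has_greatest (S : operator -> Prop) : Prop :=
  exists cl1, S cl1 /\ forall cl, S cl -> op_le cl cl1.

End Closure.

(* Main.v *)
From Stdlib Require Import List Classical FunctionalExtensionality.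
Require Import Defs.
From mathcomp Require Import ssreflect ssrfun ssrbool eqtype ssrnat seq fintype bigop.
From mathcomp Require Import zify.
Set Implicit Arguments. Unset Strict Implicit. Unset Printing Implicit Defensive.

Definition maxo n (F : 'I_n -> nat) := \max_(k < n) F k.
Arguments maxo : simpl never.
Lemma maxo_ge n (F : 'I_n -> nat) k : F k <= maxo F.
Proof. exact: leq_bigmax. Qed.
Definition freshv (s : nat -> nat) (b : nat) := (maxo (fun i : 'I_b.+1 => s i)).+1.
Arguments freshv : simpl never.
Lemma freshv_gt s b i : i <= b -> s i < freshv s b.
Proof. move=> H. rewrite /freshv ltnS. exact: (maxo_ge (fun j : 'I_b.+1 => s j) (@Ordinal b.+1 i H)). Qed.

Fixpoint tvb (L : language) (t : term L) : nat :=
  match t with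
  | tvar j => j
  | tapp f args => maxo (fun k => tvb (args k))
  end.

Fixpoint vb (L : language) (phi : formula L) : nat :=
  match phi with
  | fFalse => 0
  | fEq t1 t2 => maxn (tvb t1) (tvb t2)
  | fRel r args => maxo (fun k => tvb (args k))
  | fNeg p => vb p
  | fAnd p q => maxn (vb p) (vb q)
  | fOr p q => maxn (vb p) (vb q)
  | fEx n p => maxn n (vb p)
  end.

Lemma tfree_le (L : language) (t : term L) i : term_free i t -> i <= tvb t.
Proof.
elim: t => [j /= -> //| f args IH /= [k Hk]].
apply: leq_trans (IH k Hk) _. exact: (maxo_ge (fun k => tvb (args k)) k).
Qed.

Lemma free_le (L : language) (phi : formula L) i : free_in i phi -> i <= vb phi.
Proof.
elim: phi => //=.
- move=> t1 t2 [/tfree_le H|/tfree_le H]; lia.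
- move=> r args [k /tfree_le Hk]. apply: leq_trans Hk _.
  exact: (maxo_ge (fun k => tvb (args k)) k).
- move=> p IHp q IHq [/IHp|/IHq]; lia.
- move=> p IHp q IHq [/IHp|/IHq]; lia.
- move=> n p IH [_ /IH]; lia.
Qed.

Fixpoint trename (L : language) (s : nat -> nat) (t : term L) : term L :=
  match t with
  | tvar j => tvar L (s j)
  | tapp f args => @tapp L f (fun k => trename s (args k))
  end.

Fixpoint rename (L : language) (s : nat -> nat) (phi : formula L) : formula L :=
  match phi with
  | fFalse => fFalse L
  | fEq t1 t2 => fEq (trename s t1) (trename s t2)
  | fRel r args => @fRel L r (fun k => trename s (args k))
  | fNeg p => fNeg (rename s p)
  | fAnd p q => fAnd (rename s p) (rename s q)
  | fOr p q => fOr (rename s p) (rename s q)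
  | fEx n p => let m := freshv s (vb p) in
      fEx m (rename (fun i => if i == n then m else s i) p)
  end.

Lemma teval_rename (L : language) (M : structure L) s (v : nat -> M) t :
  teval v (trename s t) = teval (fun i => v (s i)) t.
Proof.
elim: t => [j //| f args IH /=]. congr funI. apply: functional_extensionality => k. exact: IH.
Qed.

Lemma teval_coinc (L : language) (M : structure L) (v w : nat -> M) t :
  (forall i, term_free i t -> v i = w i) -> teval v t = teval w t.
Proof.
elim: t => [j H /=| f args IH H /=]; first exact: H.
congr funI. apply: functional_extensionality => k. apply: IH => i Hi. apply: H. by exists k.
Qed.

Lemma sat_coinc (L : language) (M : structure L) (phi : formula L) :
  forall (v w : nat -> M), (forall i, free_in i phi -> v i = w i) -> (sat v phi <-> sat w phi).
Proof.
elim: phi => /=.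
- by [].
- move=> t1 t2 v w H. rewrite (teval_coinc (v:=v) (w:=w) (t:=t1)); last by move=> i Hi; apply: H; left.
  by rewrite (teval_coinc (v:=v) (w:=w) (t:=t2)); last by move=> i Hi; apply: H; right.
- move=> r args v w H. have -> : (fun k => teval v (args k)) = (fun k => teval w (args k)); last by [].
  apply: functional_extensionality => k. apply: teval_coinc => i Hi. apply: H; by exists k.
- move=> p IH v w H. by rewrite (IH v w H).
- move=> p IHp q IHq v w H. rewrite (IHp v w) ?(IHq v w) //; move=> i Hi; apply: H; by [right|left].
- move=> p IHp q IHq v w H. rewrite (IHp v w) ?(IHq v w) //; move=> i Hi; apply: H; by [right|left].
- move=> n p IH v w H. have E : forall a, sat (upd v n a) p <-> sat (upd w n a) p.
    move=> a. apply: IH => i Hi. rewrite /upd. case: eqP => [//|Hn]. apply: H; by split.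
  split=> [[a Ha]|[a Ha]]; exists a; by apply/E.
Qed.

Lemma sat_rename (L : language) (M : structure L) (phi : formula L) :
  forall s (v : nat -> M), sat v (rename s phi) <-> sat (fun i => v (s i)) phi.
Proof.
elim: phi => /=.
- by [].
- move=> t1 t2 s v. by rewrite !teval_rename.
- move=> r args s v. have -> : (fun k => teval v (trename s (args k))) = (fun k => teval (fun i => v (s i)) (args k)) => //.
  apply: functional_extensionality => k. exact: teval_rename.
- move=> p IH s v. by rewrite IH.
- move=> p IHp q IHq s v. by rewrite IHp IHq.
- move=> p IHp q IHq s v. by rewrite IHp IHq.
- move=> n p IH s v. set m := freshv s (vb p).
  have E : forall a, sat (upd v m a) (rename (fun i => if i == n then m else s i) p) <->
                     sat (upd (fun i => v (s i)) n a) p.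
    move=> a. rewrite IH. apply: sat_coinc => i Hi. rewrite /upd.
    case: (i =P n) => [_|Hn]; first by rewrite eqxx.
    have Hlt : s i < m by apply: freshv_gt; exact: free_le Hi.
    by rewrite ifN // neq_ltn Hlt.
  split=> [[a Ha]|[a Ha]]; exists a; by apply/E.
Qed.

Lemma tfree_rename (L : language) s (t : term L) i :
  term_free i (trename s t) -> exists j, term_free j t /\ i = s j.
Proof.
elim: t => [j /= ->| f args IH [k /IH [j [Hj ->]]]]; first by exists j.
exists j; split => //; by exists k.
Qed.

Lemma free_rename (L : language) (phi : formula L) :
  forall s i, free_in i (rename s phi) -> exists j, free_in j phi /\ i = s j.
Proof.
elim: phi => /=.
- by [].
- move=> t1 t2 s i [/tfree_rename [j [Hj ->]]|/tfree_rename [j [Hj ->]]]; exists j; by [split; [left|]|split; [right|]].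
- move=> r args s i [k /tfree_rename [j [Hj ->]]]. exists j; split => //; by exists k.
- move=> p IH s i /IH. by [].
- move=> p IHp q IHq s i [/IHp [j [Hj ->]]|/IHq [j [Hj ->]]]; exists j; by [split; [left|]|split; [right|]].
- move=> p IHp q IHq s i [/IHp [j [Hj ->]]|/IHq [j [Hj ->]]]; exists j; by [split; [left|]|split; [right|]].
- move=> n p IH s i [Him /IH [j [Hj Ei]]]. exists j. move: Ei.
  case: (j =P n) => [_ Ei //|Hn ->]. by split.
Qed.

Fixpoint AM (L : language) (N : nat) (phi : formula L) : formula L :=
  match N with
  | 0 => fNeg (fEx 0 phi)
  | N'.+1 => let z := (vb phi).+1 in
      fEx z (AM N' (fAnd phi (fNeg (fEq (tvar L 0) (tvar L z)))))
  end.

Lemma free_AM (L : language) N : forall (phi : formula L) i, free_in i (AM N phi) -> free_in i phi /\ i <> 0.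
Proof.
elim: N => [|N IH] phi i /=; first by case=> ? ?; split.
move=> [Hz /IH /= [[//|[/= E|/= E]] Hi0]]; by [split|].
Qed.

Lemma atmost_ext (L : language) (M : structure L) N (S S' : M -> Prop) :
  (forall x, S x <-> S' x) -> atmost N S -> atmost N S'.
Proof. move=> E [l [Hl H]]. exists l; split => // x /E; exact: H. Qed.

Lemma atmost_mono (L : language) (M : structure L) N N' (S : M -> Prop) :
  N <= N' -> atmost N S -> atmost N' S.
Proof. move=> HN [l [Hl H]]. exists l; split => //; exact: leq_trans Hl HN. Qed.

Lemma atmostS (L : language) (M : structure L) N (S : M -> Prop) :
  atmost N.+1 S <-> exists c, atmost N (fun a => S a /\ a <> c).
Proof.
split.
- move=> [[|c l] [Hl H]].
  + exists (witness M), nil; split => // x [/H []].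
  + exists c, l; split => // x [/H [->|//] ?]; by [].
- move=> [c [l [Hl H]]]. exists (c :: l); split => // x Sx.
  case: (classic (x = c)) => [->|Hx]; first by left.
  right; exact: H.
Qed.

Lemma sat_AM (L : language) (M : structure L) N : forall (phi : formula L) (v : nat -> M),
  sat v (AM N phi) <-> atmost N (fun a => sat (upd v 0 a) phi).
Proof.
elim: N => [|N IH] phi v /=.
- split.
  + move=> H. exists nil; split => // x Hx; apply: H; by exists x.
  + move=> [[|? ?] [Hl H]] // [a Ha]. exact: (H a Ha).
- rewrite atmostS. set z := (vb phi).+1.
  have E : forall c a, sat (upd (upd v z c) 0 a) phi <-> sat (upd v 0 a) phi.
    move=> c a. apply: sat_coinc => i /free_le Hi. rewrite /upd.
    case: (i =P 0) => // _. have /negbTE -> // : i != z. rewrite neq_ltn; apply/orP; left. by rewrite ltnS.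
  have Ez : forall c a, (a <> (if z == z then c else v z)) <-> a <> c.
    by move=> c a; rewrite eqxx.
  split=> [[c Hc]|[c Hc]]; exists c.
  + move: Hc; rewrite IH; apply: atmost_ext => a /=. rewrite E. rewrite /upd /= Ez. by [].
  + rewrite IH; move: Hc; apply: atmost_ext => a /=. rewrite E. rewrite /upd /= Ez. by [].
Qed.

Lemma env_ord (L : language) (M : structure L) k (p : 'I_k -> M) x j (H : j < k) :
  env x p j.+1 = p (Ordinal H).
Proof.
rewrite /env. case: insubP => [u _ Hu|]; last by rewrite H.
congr p. apply: val_inj. by rewrite /= Hu.
Qed.

Lemma env_out (L : language) (M : structure L) k (p : 'I_k -> M) x j :
  k <= j -> env x p j.+1 = x.
Proof. move=> H. rewrite /env. case: insubP => [u Hu _|//]. by rewrite ltnNge H in Hu. Qed.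

Lemma env_in (L : language) (M : structure L) k (p : 'I_k -> M) x y j :
  j < k -> env x p j.+1 = env y p j.+1.
Proof. move=> H. by rewrite !(env_ord _ _ H). Qed.

Lemma env_mem (L : language) (M : structure L) k (p : 'I_k -> M) (A : M -> Prop) x j :
  (forall i, A (p i)) -> j < k -> A (env x p j.+1).
Proof. move=> HA H. rewrite (env_ord _ _ H). exact: HA. Qed.

Lemma sol_coinc (L : language) (M : structure L) (phi : pformula L) (p : 'I_(pk phi) -> M) x
  (V : nat -> M) : V 0 = x -> (forall i, 0 < i <= pk phi -> V i = env x p i) ->
  (sat V (pform phi) <-> sol p x).
Proof.
move=> H0 H. rewrite /sol. apply: sat_coinc => i Hi.
case: i Hi => [|i] Hi; first by rewrite H0.
apply: H. by rewrite /= (pbound Hi).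
Qed.

Lemma sol_rename (L : language) (M : structure L) (phi : pformula L) (p : 'I_(pk phi) -> M) x
  s (W : nat -> M) : W (s 0) = x -> (forall i, 0 < i <= pk phi -> W (s i) = env x p i) ->
  (sat W (rename s (pform phi)) <-> sol p x).
Proof. move=> H0 H. rewrite sat_rename. exact: sol_coinc. Qed.

Definition shifts (k : nat) : nat -> nat := fun i => if i == 0 then 0 else i + k.

Definition meetF (L : language) (phi1 phi2 : pformula L) (N1 N2 : nat) : formula L :=
  let psi2 := rename (shifts (pk phi1)) (pform phi2) in
  fAnd (fAnd (pform phi1) psi2) (fAnd (AM N1 (pform phi1)) (AM N2 psi2)).

Lemma meet_bound (L : language) (phi1 phi2 : pformula L) N1 N2 i :
  free_in i (meetF phi1 phi2 N1 N2) -> i <= pk phi1 + pk phi2.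
Proof.
have H1 : free_in i (pform phi1) -> i <= pk phi1 + pk phi2.
  move/pbound => H; lia.
have H2 : free_in i (rename (shifts (pk phi1)) (pform phi2)) -> i <= pk phi1 + pk phi2.
  move=> /free_rename [j [/pbound Hj ->]]. rewrite /shifts. case: (j =P 0) => _; lia.
rewrite /meetF /=. by move=> [[/H1|/H2]|[/free_AM [/H1 ?]|/free_AM [/H2 ?]]].
Qed.

Definition meetP (L : language) (phi1 phi2 : pformula L) (N1 N2 : nat) : pformula L :=
  @PFormula L (pk phi1 + pk phi2) (meetF phi1 phi2 N1 N2) (@meet_bound L phi1 phi2 N1 N2).

Lemma meet_sol (L : language) (M : structure L) (phi1 phi2 : pformula L) N1 N2
  (p : 'I_(pk phi1 + pk phi2) -> M) x :
  let p1 := fun j => p (lshift (pk phi2) j) in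
  let p2 := fun j => p (rshift (pk phi1) j) in
  @sol L M (meetP phi1 phi2 N1 N2) p x <->
  (sol p1 x /\ sol p2 x) /\ (atmost N1 (sol p1) /\ atmost N2 (sol p2)).
Proof.
move=> p1 p2.
have E1 : forall y (V : nat -> M), V 0 = y -> (forall i, 0 < i -> V i = env x p i) ->
   (sat V (pform phi1) <-> sol p1 y).
  move=> y V H0 H. apply: sol_coinc => //. move=> [|j] // Hj0. have Hj : j < pk phi1 by lia.
  rewrite H // (env_ord _ _ (leq_trans Hj (leq_addr _ _))) (env_ord _ _ Hj) /p1.
  congr p. exact: val_inj.
have E2 : forall y (V : nat -> M), V 0 = y -> (forall i, 0 < i -> V i = env x p i) ->
   (sat V (rename (shifts (pk phi1)) (pform phi2)) <-> sol p2 y).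
  move=> y V H0 H. apply: sol_rename => //. move=> [|j] // Hj0. have Hj : j < pk phi2 by lia.
  change (V (j.+1 + pk phi1) = env y p2 j.+1). rewrite addSn H //.
  have Hj' : j + pk phi1 < pk phi1 + pk phi2 by lia.
  rewrite (env_ord _ _ Hj') (env_ord _ _ Hj) /p2.
  congr p. apply: val_inj => /=. lia.
rewrite /sol /= sat_AM sat_AM.
have U : forall a i, 0 < i -> upd (env x p) 0 a i = env x p i.
  move=> a [|i] //.
rewrite (E1 x) // (E2 x) //.
have F1 : forall a, sat (upd (env x p) 0 a) (pform phi1) <-> sol p1 a.
  move=> a; apply: E1 => //. move=> [|i] //.
have F2 : forall a, sat (upd (env x p) 0 a) (rename (shifts (pk phi1)) (pform phi2)) <-> sol p2 a.
  move=> a; apply: E2 => //. move=> [|i] //.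
have G1 := atmost_ext (N := N1) F1.
have G2 := atmost_ext (N := N2) F2.
have G1' : atmost N1 (sol p1) -> atmost N1 (fun a => sat (upd (env x p) 0 a) (pform phi1)).
  apply: atmost_ext => a; by rewrite F1.
have G2' : atmost N2 (sol p2) -> atmost N2 (fun a => sat (upd (env x p) 0 a) (rename (shifts (pk phi1)) (pform phi2))).
  apply: atmost_ext => a; by rewrite F2.
tauto.
Qed.

Definition sig_s (r' k : nat) : nat -> nat :=
  fun i => if i == 0 then 0 else if i < k then i + r' else (r' + k.-1).+1.
Definition tau_s (r' k : nat) : nat -> nat :=
  fun i => if i == 0 then (r' + k.-1).+1 else i.

Definition substF (L : language) (psi phi : pformula L) (N : nat) : formula L :=
  let r' := pk psi in let k := pk phi in
  let phis := rename (sig_s r' k) (pform phi) in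
  fEx (r' + k.-1).+1 (fAnd (rename (tau_s r' k) (pform psi)) (fAnd phis (AM N phis))).

Lemma subst_bound (L : language) (psi phi : pformula L) N i :
  free_in i (substF psi phi N) -> i <= pk psi + (pk phi).-1.
Proof.
set r' := pk psi; set k := pk phi.
have H2 : i <> (r' + k.-1).+1 -> free_in i (rename (sig_s r' k) (pform phi)) -> i <= r' + k.-1.
  move=> Hw /free_rename [j [/pbound Hj Ei]]. move: Ei Hw; rewrite /sig_s.
  case: (j =P 0) => [_ -> //|Hj0]. case: ifP => Hjk -> //; lia.
rewrite /substF /=. move=> [Hw [/free_rename [j [/pbound Hj Ei]]|[/(H2 Hw) //|/free_AM [/(H2 Hw) //]]]].
move: Ei Hw; rewrite /tau_s. case: (j =P 0) => [_ -> //|Hj0 ->]. rewrite /r'; lia.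
Qed.

Definition substP (L : language) (psi phi : pformula L) (N : nat) : pformula L :=
  @PFormula L (pk psi + (pk phi).-1) (substF psi phi N) (@subst_bound L psi phi N).

Lemma subst_sol (L : language) (M : structure L) (psi phi : pformula L) N
  (p : 'I_(pk psi + (pk phi).-1) -> M) y :
  let pa := fun i => p (lshift (pk phi).-1 i) in
  let pd := fun d (i : 'I_(pk phi)) => if val i < (pk phi).-1 then env d p (pk psi + i).+1 else d in
  @sol L M (substP psi phi N) p y <->
  exists d, sol pa d /\ sol (pd d) y /\ atmost N (sol (pd d)).
Proof.
move=> pa pd.
set r' := pk psi; set k := pk phi; set w := (r' + k.-1).+1.
have Ew : w != 0 by [].
have Eps : forall d, sat (upd (env y p) w d) (rename (tau_s r' k) (pform psi)) <-> sol pa d.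
  move=> d. apply: sol_rename.
    by rewrite /tau_s /= /upd eqxx.
  move=> [|j] // Hj0. have Hj : j < r' by rewrite /r'; lia.
  have -> : tau_s r' k j.+1 = j.+1 by []. rewrite /upd. have /negbTE -> : j.+1 != w by rewrite /w; lia.
  rewrite (env_ord _ _ (leq_trans Hj (leq_addr _ _))) (env_ord _ _ Hj) /pa.
  congr p; exact: val_inj.
have Eph : forall d z (W : nat -> M), W 0 = z -> W w = d -> (forall i, 0 < i < w -> W i = env y p i) ->
   (sat W (rename (sig_s r' k) (pform phi)) <-> sol (pd d) z).
  move=> d z W H0 Hw H. apply: sol_rename; first by [].
  move=> [|j] // Hj0. have Hj : j < k by rewrite /k; lia.
  have -> : sig_s r' k j.+1 = if j.+1 < k then j.+1 + r' else w by [].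
  rewrite (env_ord _ _ Hj) /pd.
  case: ifP => Hjk.
  + have Hjt : j < k.-1 by lia.
    rewrite Hjt H; last by rewrite /w; lia.
    have Hl : r' + j < r' + k.-1 by lia.
    rewrite addSn [j + r']addnC. exact: env_in Hl.
  + have Hjt : (j < k.-1) = false by lia.
    by rewrite Hjt.
rewrite {1}/sol.
have U2 : forall d, upd (env y p) w d w = d by move=> d; rewrite /upd eqxx.
have U3 : forall d i, 0 < i < w -> upd (env y p) w d i = env y p i.
  move=> d i Hi; rewrite /upd ifN //; apply/eqP; lia.
have V1 : forall d a, upd (upd (env y p) w d) 0 a 0 = a by move=> d a; rewrite /upd eqxx.
have V2 : forall d a, upd (upd (env y p) w d) 0 a w = d by move=> d a; rewrite /upd eqxx.
have V3 : forall d a i, 0 < i < w -> upd (upd (env y p) w d) 0 a i = env y p i.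
  move=> d a i Hi; rewrite /upd ifN; last by apply/eqP; lia. rewrite ifN //; apply/eqP; lia.
have Eph1 := fun d => Eph d y (upd (env y p) w d) (erefl _) (U2 d) (U3 d).
have Eph2 := fun d a => Eph d a (upd (upd (env y p) w d) 0 a) (V1 d a) (V2 d a) (V3 d a).
split=> [[d [H1 [H2 H3]]]|[d [H1 [H2 H3]]]].
- exists d. split; first exact: (proj1 (Eps d) H1).
  split; first exact: (proj1 (Eph1 d) H2).
  have H3' : sat (upd (env y p) w d) (AM N (rename (sig_s r' k) (pform phi))) := H3.
  move: H3'; rewrite sat_AM; apply: atmost_ext => a. exact: Eph2.
- exists d. split; first exact: (proj2 (Eps d) H1).
  split; first exact: (proj2 (Eph1 d) H2).
  suff : sat (upd (env y p) w d) (AM N (rename (sig_s r' k) (pform phi))) by [].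
  rewrite sat_AM; move: H3; apply: atmost_ext => a. by rewrite Eph2.
Qed.

Lemma finite_union (L : language) (M : structure L) (l : list M) (S : M -> M -> Prop) N :
  finite_set (fun y => exists d, In d l /\ atmost N (S d) /\ S d y).
Proof.
elim: l => [|d0 l [l' IH]]; first by exists nil => y [d [[] _]].
case: (classic (atmost N (S d0))) => [[l0 [_ H0]]|Hn].
- exists (l0 ++ l') => y [d [[<-|Hd] [Ha Hy]]]; apply/in_or_app; [left; exact: H0|right; apply: IH; by exists d].
- exists l' => y [d [[E|Hd] [Ha Hy]]]; first by subst. apply: IH; by exists d.
Qed.

Lemma acl_step (L : language) (M : structure L) (A : M -> Prop) j : forall r (phi : pformula L)
  (p : 'I_(pk phi) -> M) x, pk phi = r + j ->
  (forall i : 'I_(pk phi), nat_of_ord i < r -> A (p i)) ->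
  (forall i : 'I_(pk phi), r <= nat_of_ord i -> acl A (p i)) ->
  finite_set (sol p) -> sol p x -> acl A x.
Proof.
elim: j => [|j IH] r phi p x Hpk HA Hacl Hfin Hx.
  exists phi; split => //; exists p; split; last by split.
  move=> i. apply: HA. have := ltn_ord i. lia.
have Ht : r + j < pk phi by rewrite Hpk addnS.
have [psi [_ [a [Ha [[la Hla] Hb]]]]] := Hacl (Ordinal Ht) (leq_addr _ _).
set b := p (Ordinal Ht) in Hb.
have [l Hl] := Hfin. set N := size l.
have HN : atmost N (sol p) by exists l.
pose p' := fun i : 'I_(pk psi + (pk phi).-1) =>
  if nat_of_ord i < pk psi then env x a (nat_of_ord i).+1 else env x p (nat_of_ord i - pk psi).+1.
have Epa : (fun i => p' (lshift (pk phi).-1 i)) = a.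
  apply: functional_extensionality => i. rewrite /p'.
  have -> : val (lshift (pk phi).-1 i) = nat_of_ord i by [].
  rewrite ltn_ord (env_ord _ _ (ltn_ord i)).
  congr a; exact: val_inj.
have Epd : (fun i : 'I_(pk phi) => if nat_of_ord i < (pk phi).-1 then env b p' (pk psi + i).+1 else b) = p.
  apply: functional_extensionality => i. case: ifP => Hi.
  + have Hi' : pk psi + i < pk psi + (pk phi).-1 by rewrite ltn_add2l.
    rewrite (env_ord _ _ Hi') /p'.
    have -> : val (Ordinal Hi') = pk psi + i by [].
    have -> : (pk psi + i < pk psi) = false by lia.
    rewrite addKn (env_ord _ _ (ltn_ord i)).
    congr p; exact: val_inj.
  + rewrite /b. congr p. apply: val_inj => /=. move: (ltn_ord i) Hi; lia.
apply: (IH (pk psi + r) (substP psi phi N) p').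
- rewrite /= Hpk; lia.
- rewrite /=. move=> i Hi. rewrite /p'. case: ifP => Hi1; first exact: env_mem.
  have Hi2 : nat_of_ord i - pk psi < pk phi by lia.
  rewrite (env_ord _ _ Hi2). apply: HA => /=; lia.
- rewrite /=. move=> i Hi. rewrite /p'. have Hi1 : (nat_of_ord i < pk psi) = false by lia.
  rewrite Hi1. have Hi2 : nat_of_ord i - pk psi < pk phi by have := ltn_ord i; lia.
  rewrite (env_ord _ _ Hi2). apply: Hacl => /=; lia.
- have [l' Hl'] := finite_union la (fun d y => @sol L M phi (fun i : 'I_(pk phi) =>
     if nat_of_ord i < (pk phi).-1 then env d p' (pk psi + i).+1 else d) y) N.
  exists l' => y /subst_sol [d [H1 [H2 H3]]]. apply: Hl'. exists d. split; last by split.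
  apply: Hla. by rewrite -Epa.
- apply/subst_sol. exists b. rewrite Epa Epd. by split.
Qed.

Lemma eq_bound (L : language) i : free_in i (fEq (tvar L 0) (tvar L 1)) -> i <= 1.
Proof. by move=> /= [->|->]. Qed.

Definition eqPF (L : language) : pformula L := @PFormula L 1 (fEq (tvar L 0) (tvar L 1)) (@eq_bound L).

Lemma eq_sol (L : language) (M : structure L) (a : 'I_1 -> M) x : @sol L M (eqPF L) a x <-> x = a ord0.
Proof.
change (x = env x a 1 <-> x = a ord0). have H : 0 < 1 by []. rewrite (env_ord _ _ H).
by have -> : Ordinal H = ord0 by apply: val_inj.
Qed.

Definition mono (L : language) (M : structure L) (cl : operator M) :=
  forall (B C : M -> Prop), (forall x, B x -> C x) -> forall x, cl B x -> cl C x.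

Lemma aclD_mono (L : language) (M : structure L) D : mono (aclD (M:=M) D).
Proof. move=> B C H x [phi [Hd [a [Ha R]]]]. exists phi; split => //; exists a; split => // i; exact: H. Qed.

Lemma aclDn_mono (L : language) (M : structure L) D n : mono (aclDn (M:=M) D n).
Proof. move=> B C H x [phi [Hd [a [Ha R]]]]. exists phi; split => //; exists a; split => // i; exact: H. Qed.

Lemma mono_ext (L : language) (M : structure L) (cl cl' : operator M) :
  (forall A x, cl A x <-> cl' A x) -> mono cl' -> mono cl.
Proof. move=> E H B C HBC x /E Hx. apply/E. exact: H HBC x Hx. Qed.

Lemma meet_regular (L : language) (M : structure L) (cl1 cl2 : operator M) :
  regular cl1 -> regular cl2 -> mono cl1 -> mono cl2 -> regular (op_meet cl1 cl2).
Proof.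
move=> R1 R2 M1 M2 A; split.
- move=> x Ax; split; [exact: (proj1 (R1 A)) | exact: (proj1 (R2 A))].
- move=> x [H1 H2]; split.
  + apply: (proj2 (R1 A)). apply: M1 H1 => y [Hy _]; exact: Hy.
  + apply: (proj2 (R2 A)). apply: M2 H2 => y [_ Hy]; exact: Hy.
Qed.

Lemma regular_acl (L : language) (M : structure L) : regular (acl (M:=M)).
Proof.
move=> A; split.
- move=> x Ax. exists (eqPF L); split => //; exists (fun _ => x); split => //.
  split; last by apply/eq_sol. exists (x :: nil) => y /eq_sol ->; by left.
- move=> x [phi [_ [p [Hp [Hfin Hx]]]]].
  apply: (@acl_step L M A (pk phi) 0 phi p x) => // i; by rewrite ?ltn0 ?addn0.
Qed.

Definition meetD (L : language) (D1 D2 : pformula L -> Prop) (R : nat -> nat -> Prop) :=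
  fun chi => exists phi1 phi2 N1 N2, D1 phi1 /\ D2 phi2 /\ R N1 N2 /\ chi = meetP phi1 phi2 N1 N2.

Definition catp (L : language) (M : structure L) k1 k2 (p1 : 'I_k1 -> M) (p2 : 'I_k2 -> M) :
  'I_(k1 + k2) -> M := fun i => match split i with inl j => p1 j | inr j => p2 j end.

Lemma catp_l (L : language) (M : structure L) k1 k2 (p1 : 'I_k1 -> M) (p2 : 'I_k2 -> M) :
  (fun j => catp p1 p2 (lshift k2 j)) = p1.
Proof. apply: functional_extensionality => j. by rewrite /catp (unsplitK (inl _ j)). Qed.

Lemma catp_r (L : language) (M : structure L) k1 k2 (p1 : 'I_k1 -> M) (p2 : 'I_k2 -> M) :
  (fun j => catp p1 p2 (rshift k1 j)) = p2.
Proof. apply: functional_extensionality => j. by rewrite /catp (unsplitK (inr _ j)). Qed.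

Lemma catp_mem (L : language) (M : structure L) (A : M -> Prop) k1 k2 (p1 : 'I_k1 -> M) (p2 : 'I_k2 -> M) :
  (forall i, A (p1 i)) -> (forall i, A (p2 i)) -> forall i, A (catp p1 p2 i).
Proof. move=> H1 H2 i. rewrite /catp. by case: (split i). Qed.

Lemma atmost_fin (L : language) (M : structure L) N (S : M -> Prop) : atmost N S -> finite_set S.
Proof. move=> [l [_ H]]; by exists l. Qed.

Lemma meet_acl (L : language) (M : structure L) D1 D2 A x :
  aclD (M:=M) (meetD D1 D2 (fun _ _ => True)) A x <-> aclD D1 A x /\ aclD D2 A x.
Proof.
split.
- move=> [chi [[phi1 [phi2 [N1 [N2 [H1 [H2 [_ ->]]]]]]] [p [Hp [Hfin /meet_sol [[S1 S2] [A1 A2]]]]]]].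
  split.
  + exists phi1; split => //; eexists; split; last by split; [exact: atmost_fin A1|exact: S1].
    move=> i; exact: Hp.
  + exists phi2; split => //; eexists; split; last by split; [exact: atmost_fin A2|exact: S2].
    move=> i; exact: Hp.
- move=> [[phi1 [H1 [p1 [Hp1 [[l1 Hl1] S1]]]]] [phi2 [H2 [p2 [Hp2 [[l2 Hl2] S2]]]]]].
  exists (meetP phi1 phi2 (size l1) (size l2)); split.
    exists phi1, phi2, (size l1), (size l2); by do 3 (split => //).
  exists (catp p1 p2); split; first exact: catp_mem.
  split.
  + exists l1 => y /meet_sol. rewrite catp_l catp_r. move=> [[Y _] _]; exact: Hl1.
  + apply/meet_sol. rewrite catp_l catp_r. split => //. by split; [exists l1 | exists l2].
Qed.

Lemma meet_acln (L : language) (M : structure L) D1 D2 n A x :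
  aclDn (M:=M) (meetD D1 D2 (fun N1 N2 => N1 = n /\ N2 = n)) n A x <-> aclDn D1 n A x /\ aclDn D2 n A x.
Proof.
split.
- move=> [chi [[phi1 [phi2 [N1 [N2 [H1 [H2 [[E1 E2] ->]]]]]]] [p [Hp [Hfin /meet_sol [[S1 S2] [A1 A2]]]]]]].
  subst. split.
  + exists phi1; split => //; eexists; split; last by split; [exact: A1|exact: S1].
    move=> i; exact: Hp.
  + exists phi2; split => //; eexists; split; last by split; [exact: A2|exact: S2].
    move=> i; exact: Hp.
- move=> [[phi1 [H1 [p1 [Hp1 [[l1 [Hs1 Hl1]] S1]]]]] [phi2 [H2 [p2 [Hp2 [[l2 [Hs2 Hl2]] S2]]]]]].
  exists (meetP phi1 phi2 n n); split.
    exists phi1, phi2, n, n; by do 3 (split => //).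
  exists (catp p1 p2); split; first exact: catp_mem.
  split.
  + exists l1; split => // y /meet_sol. rewrite catp_l catp_r. move=> [[Y _] _]; exact: Hl1.
  + apply/meet_sol. rewrite catp_l catp_r. split => //. by split; [exists l1 | exists l2].
Qed.

Theorem mainTheorem7 (L : language) (T : formula L -> Prop)
  (K : Type) (M : structure L) :
  complete_theory T ->
  (exists f : nat -> K, injective f) ->
  models M T ->
  saturated M K ->
  (meet_semilattice_by_intersection (@in_SL_acl L M) /\
   has_least (@in_SL_acl L M) /\ has_greatest (@in_SL_acl L M)) /\
  (forall n : nat, 0 < n ->
     meet_semilattice_by_intersection (@in_SL_acln L M n) /\
     has_least (@in_SL_acln L M n) /\
     (regular (@acln L M n) -> has_greatest (@in_SL_acln L M n))).
Proof.
move=> _ _ _ _. split; [split; [|split] | move=> n n0; split; [|split]].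
- move=> cl1 cl2 [R1 [D1 E1]] [R2 [D2 E2]]. split.
    apply: meet_regular => //; apply: mono_ext; [exact: E1|exact: aclD_mono|exact: E2|exact: aclD_mono].
  exists (meetD D1 D2 (fun _ _ => True)) => A x. rewrite meet_acl /op_meet E1 E2. by [].
- exists (fun A x => A x). split.
    split; first by move=> A; split.
    exists (fun phi => phi = eqPF L) => A x; split.
    + move=> Ax. exists (eqPF L); split => //; exists (fun _ => x); split => //.
      split; last by apply/eq_sol. exists (x :: nil) => y /eq_sol ->; by left.
    + move=> [phi [-> [a [Ha [_ /eq_sol ->]]]]]. exact: Ha.
  move=> cl [R _] A x Ax. exact: (proj1 (R A)).
- exists (acl (M:=M)). split.
    split; first exact: regular_acl. by exists (@all_formulas L).
  move=> cl [_ [D E]] A x /E [phi [_ H]]. by exists phi.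
- move=> cl1 cl2 [R1 [D1 E1]] [R2 [D2 E2]]. split.
    apply: meet_regular => //; apply: mono_ext; [exact: E1|exact: aclDn_mono|exact: E2|exact: aclDn_mono].
  exists (meetD D1 D2 (fun N1 N2 => N1 = n /\ N2 = n)) => A x. rewrite meet_acln /op_meet E1 E2. by [].
- exists (fun A x => A x). split.
    split; first by move=> A; split.
    exists (fun phi => phi = eqPF L) => A x; split.
    + move=> Ax. exists (eqPF L); split => //; exists (fun _ => x); split => //.
      split; last by apply/eq_sol. exists (x :: nil); split => // y /eq_sol ->; by left.
    + move=> [phi [-> [a [Ha [_ /eq_sol ->]]]]]. exact: Ha.
  move=> cl [R _] A x Ax. exact: (proj1 (R A)).
- move=> Rn. exists (acln (M:=M) n). split.
    split; first exact: Rn. by exists (@all_formulas L).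
  move=> cl [_ [D E]] A x /E [phi [_ H]]. by exists phi.
Qed.
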